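(* Let $m=pq$ with $p,q$ distinct primes. For each $n\ge4$ and each $i$ with $1\le i\le n$ there exists an edge-labeling $\alpha$ of the complete graph $K_n$ by ideals of $\mathbb{Z}/m\mathbb{Z}$ such that $\operatorname{rk}[\mathbb{Z}/m\mathbb{Z}]_{(K_n,\alpha)}=i$.
   Context: An edge-labeling assigns to each edge of a graph a nonzero proper ideal of $\mathbb{Z}/m\mathbb{Z}$. A spline on an edge-labeled graph $(G,\alpha)$ with vertices $v_1,\dots,v_n$ is a vector $(f_{v_1},\dots,f_{v_n})\in(\mathbb{Z}/m\mathbb{Z})^n$ with $f_{v_i}-f_{v_j}\in\alpha(v_iv_j)$ for every edge; the splines form a $\mathbb{Z}$-module $[\mathbb{Z}/m\mathbb{Z}]_{(G,\alpha)}$, whose rank $\operatorname{rk}$ is the smallest size of a generating set. *)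

(* Defs.v *)
From mathcomp Require Import all_boot all_algebra.
From mathcomp Require Import boolp.
Set Implicit Arguments. Unset Strict Implicit. Unset Printing Implicit Defensive.
Import GRing.Theory.
Local Open Scope ring_scope.

(* Ideals of the ring 'Z_m (= Z/mZ for m >= 2), as subsets. *)
Definition is_ideal (m : nat) (I : {set 'Z_m}) : Prop :=
  [/\ (0 : 'Z_m) \in I,
      (forall x y, x \in I -> y \in I -> x + y \in I),
      (forall x, x \in I -> - x \in I) &
      (forall r x, x \in I -> r * x \in I)].

Definition nonzero_proper_ideal (m : nat) (I : {set 'Z_m}) : Prop :=
  [/\ is_ideal I, I != [set 0] & I != [set: 'Z_m]].

Definition edge_labeling (n m : nat) (alpha : {set 'I_n} -> {set 'Z_m}) : Prop :=
  forall i j : 'I_n, i != j -> nonzero_proper_ideal (alpha [set i; j]).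

Definition splines (n m : nat) (alpha : {set 'I_n} -> {set 'Z_m})
  : {set {ffun 'I_n -> 'Z_m}} :=
  [set f : {ffun 'I_n -> 'Z_m} |
     [forall i : 'I_n, forall j : 'I_n, (i != j) ==> (f i - f j \in alpha [set i; j])]].

Definition in_Zspan (n m : nat) (G : {set {ffun 'I_n -> 'Z_m}})
  (x : {ffun 'I_n -> 'Z_m}) : Prop :=
  exists c : {ffun {ffun 'I_n -> 'Z_m} -> int}, x = \sum_(g in G) g *~ c g.

Definition generates (n m : nat) (S G : {set {ffun 'I_n -> 'Z_m}}) : Prop :=
  G \subset S /\ forall x, x \in S -> in_Zspan G x.

Definition spline_rank (n m : nat) (alpha : {set 'I_n} -> {set 'Z_m}) : nat :=
  \big[minn/#|splines alpha|]_(G : {set {ffun 'I_n -> 'Z_m}}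
      | `[< generates (splines alpha) G >]) #|G|.

(* Main.v *)
Require Import Defs.
From mathcomp Require Import all_boot all_algebra boolp zify.
Import GRing.Theory.
Set Implicit Arguments. Unset Strict Implicit. Unset Printing Implicit Defensive.
Local Open Scope ring_scope.


Definition phi (M r : nat) (x : 'Z_M) : 'Z_r := (val x)%:R.

Lemma phi_nat (M r : nat) : (1 < M)%N -> (1 < r)%N -> (r %| M)%N ->
  forall a : nat, phi r (a%:R : 'Z_M) = a%:R.
Proof.
move=> M1 r1 rM a; apply: val_inj; rewrite /phi /=.
rewrite !val_Zp_nat //. exact: (modn_dvdm _ rM).
Qed.

Lemma Zp_natE (M : nat) (x : 'Z_M) : x = (val x)%:R.
Proof. by rewrite natr_Zp. Qed.

Lemma phiD M r x y : (1 < M)%N -> (1 < r)%N -> (r %| M)%N -> phi r (x + y : 'Z_M) = phi r x + phi r y.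
Proof.
move=> M1 r1 rM; have -> : x + y = (val x + val y)%:R by rewrite natrD -!Zp_natE.
by rewrite phi_nat // natrD.
Qed.

Lemma phiM M r x y : (1 < M)%N -> (1 < r)%N -> (r %| M)%N -> phi r (x * y : 'Z_M) = phi r x * phi r y.
Proof.
move=> M1 r1 rM; have -> : x * y = (val x * val y)%:R by rewrite natrM -!Zp_natE.
by rewrite phi_nat // natrM.
Qed.

Lemma phi0 M r : (1 < M)%N -> (1 < r)%N -> (r %| M)%N -> phi r (0 : 'Z_M) = 0.
Proof. by move=> M1 r1 rM; have := phi_nat M1 r1 rM 0. Qed.

Lemma phi1 M r : (1 < M)%N -> (1 < r)%N -> (r %| M)%N -> phi r (1 : 'Z_M) = 1.
Proof. by move=> M1 r1 rM; have := phi_nat M1 r1 rM 1. Qed.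

Lemma phiN M r x : (1 < M)%N -> (1 < r)%N -> (r %| M)%N -> phi r (- x : 'Z_M) = - phi r x.
Proof.
move=> M1 r1 rM; apply/eqP; rewrite -subr_eq0 opprK -phiD // addNr phi0 //.
Qed.

Lemma phiB M r x y : (1 < M)%N -> (1 < r)%N -> (r %| M)%N -> phi r (x - y : 'Z_M) = phi r x - phi r y.
Proof. by move=> *; rewrite phiD // phiN. Qed.


Lemma phi_eq0 M r (x : 'Z_M) : (1 < r)%N -> (phi r x == 0) = (r %| val x)%N.
Proof.
move=> r1; rewrite /phi -val_eqE /= val_Zp_nat //.
Qed.

Lemma val_Zlt M (x : 'Z_M) : (1 < M)%N -> (val x < M)%N.
Proof. move=> M1; have h := ltn_ord x; by rewrite -[X in (_ < X)%N](Zp_cast M1). Qed.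

Lemma crt p q (x : 'Z_(p * q)) : prime p -> prime q -> p != q ->
  phi p x = 0 -> phi q x = 0 -> x = 0.
Proof.
move=> pp pq npq /eqP; rewrite phi_eq0 ?prime_gt1 // => hp /eqP; rewrite phi_eq0 ?prime_gt1 // => hq.
have cpq : coprime p q by rewrite prime_coprime // dvdn_prime2 //.
have : (p * q %| val x)%N by rewrite Gauss_dvd // hp hq.
have M1 : (1 < p * q)%N by rewrite (@ltn_mul 1 1) ?prime_gt1.
move=> h; apply: val_inj => /=.
case: (posnP (val x)) => // xpos.
by have := dvdn_leq xpos h; rewrite leqNgt val_Zlt.
Qed.

Definition Ker M r := [set x : 'Z_M | phi r x == 0].

Lemma Ker_ideal M r : (1 < M)%N -> (1 < r)%N -> (r %| M)%N -> is_ideal (Ker M r).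
Proof.
move=> M1 r1 rM; split.
- by rewrite inE phi0.
- by move=> x y; rewrite !inE phiD // => /eqP-> /eqP->; rewrite addr0.
- by move=> x; rewrite !inE phiN // => /eqP->; rewrite oppr0.
- by move=> s x; rewrite !inE phiM // => /eqP->; rewrite mulr0.
Qed.

Lemma Ker_npi M r : (1 < M)%N -> (1 < r)%N -> (r %| M)%N -> (r < M)%N ->
  nonzero_proper_ideal (Ker M r).
Proof.
move=> M1 r1 rM rltM; split; first exact: Ker_ideal.
- apply/eqP => /setP /(_ (r%:R)); have vr : nat_of_ord (r%:R : 'Z_M) = r by rewrite val_Zp_nat // modn_small.
  rewrite !inE phi_eq0 //= vr dvdnn => /esym /eqP h; move: vr; rewrite h /=.
  by move=> e; rewrite -e in r1.
- by apply/eqP => /setP /(_ 1); rewrite !inE phi1 // ?oner_eq0.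
Qed.


Lemma phi_int M r (z : int) : (1 < M)%N -> (1 < r)%N -> (r %| M)%N ->
  phi r (z%:~R : 'Z_M) = z%:~R.
Proof.
move=> M1 r1 rM; case: z => n.
  by rewrite -!pmulrn phi_nat.
by rewrite NegzE !mulrNz phiN // -!pmulrn phi_nat.
Qed.

Lemma phiMz M r (x : 'Z_M) (z : int) : (1 < M)%N -> (1 < r)%N -> (r %| M)%N ->
  phi r (x *~ z) = phi r x *~ z.
Proof.
by move=> M1 r1 rM; rewrite -mulrzr phiM // phi_int // mulrzr.
Qed.

Lemma phi_sum M r (I : Type) (s : seq I) (P : pred I) (F : I -> 'Z_M) :
  (1 < M)%N -> (1 < r)%N -> (r %| M)%N ->
  phi r (\sum_(i <- s | P i) F i) = \sum_(i <- s | P i) phi r (F i).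
Proof.
move=> M1 r1 rM; apply: (big_morph (phi r)).
  by move=> x y; rewrite phiD.
by rewrite phi0.
Qed.

Lemma bigmin_le (I : eqType) (r : seq I) (P : pred I) (F : I -> nat) x0 i0 :
  i0 \in r -> P i0 -> (\big[minn/x0]_(i <- r | P i) F i <= F i0)%N.
Proof.
elim: r => // a r IH; rewrite in_cons big_cons => /orP [/eqP <- -> | ir Pi].
  exact: geq_minl.
case: (P a); last exact: IH.
exact: leq_trans (geq_minr _ _) (IH ir Pi).
Qed.

Lemma rank_le n m (alpha : {set 'I_n} -> {set 'Z_m}) G :
  generates (splines alpha) G -> (spline_rank alpha <= #|G|)%N.
Proof.
move=> gG; rewrite /spline_rank; apply: bigmin_le; first exact: mem_index_enum.
exact/asboolP.
Qed.

Lemma gen_self n m (S : {set {ffun 'I_n -> 'Z_m}}) : generates S S.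
Proof.
split => // x xS; exists [ffun g => ((g == x) : nat)%:Z].
rewrite (bigD1 x) //= ffunE eqxx big1 ?addr0 //.
by move=> g /andP[_ /negbTE gx]; rewrite ffunE gx.
Qed.

Lemma rank_ge n m (alpha : {set 'I_n} -> {set 'Z_m}) k :
  (forall G, generates (splines alpha) G -> (k <= #|G|)%N) -> (k <= spline_rank alpha)%N.
Proof.
move=> h; rewrite /spline_rank; apply: (big_ind (fun x => (k <= x)%N)).
- exact/h/gen_self.
- by move=> x y kx ky; rewrite leq_min kx ky.
- by move=> G /asboolP /h.
Qed.

Lemma span_imset n m k (gen : 'I_k -> {ffun 'I_n -> 'Z_m}) (coef : 'I_k -> int) :
  in_Zspan [set gen j | j in 'I_k] (\sum_(j < k) gen j *~ coef j).
Proof.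
exists [ffun g => \sum_(j < k | gen j == g) coef j].
rewrite (partition_big_imset gen) /=; apply: eq_bigr => g _.
rewrite ffunE mulrz_sumr; by apply: eq_bigr => j /eqP ->.
Qed.


Definition key n M r (f : {ffun 'I_n -> 'Z_M}) : {ffun 'I_n -> 'Z_r} :=
  [ffun v => phi r (f v)].

Lemma key_span n M r (G : {set {ffun 'I_n -> 'Z_M}}) (c : {ffun {ffun 'I_n -> 'Z_M} -> int}) :
  (1 < M)%N -> (1 < r)%N -> (r %| M)%N ->
  key r (\sum_(g in G) g *~ c g) =
  \sum_(j < #|G|) key r (enum_val j) *~ Posz (val ((c (enum_val j))%:~R : 'Z_r)).
Proof.
move=> M1 r1 rM; apply/ffunP => v; rewrite !ffunE sum_ffunE phi_sum // big_enum_val sum_ffunE.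
apply: eq_bigr => j _; rewrite !ffunMzE ffunE phiMz //.
by rewrite -[in LHS]mulrzr -[in RHS]mulrzr -pmulrn natr_Zp.
Qed.

Lemma LB n M r k (S : {set {ffun 'I_n -> 'Z_M}})
  (H : {ffun 'I_k -> 'Z_r} -> {ffun 'I_n -> 'Z_M}) G :
  (1 < M)%N -> (1 < r)%N -> (r %| M)%N ->
  (forall t, H t \in S) ->
  (forall t t', key r (H t) = key r (H t') -> t = t') ->
  generates S G -> (k <= #|G|)%N.
Proof.
move=> M1 r1 rM HS Hinj [sGS spanG].
have cardZ : #|'Z_r| = r by rewrite card_ord Zp_cast.
pose F := fun c : {ffun 'I_#|G| -> 'Z_r} => \sum_(j < #|G|) key r (enum_val j) *~ Posz (val (c j)).
have sub : [set key r (H t) | t in setT] \subset [set F c | c in setT].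
  apply/subsetP => y /imsetP [t _ ->]; have [c ->] := spanG _ (HS t).
  apply/imsetP; exists [ffun j => ((c (enum_val j))%:~R : 'Z_r)] => //.
  rewrite key_span //; apply: eq_bigr => j _.
  by have -> := ffunE (fun j0 : 'I_#|G| => ((c (enum_val j0))%:~R : 'Z_r)) j.
have h1 : #|[set key r (H t) | t in setT]| = (r ^ k)%N.
  by rewrite card_imset; [rewrite cardsT card_ffun cardZ card_ord | move=> t1 t2 /Hinj].
have h2 : (#|[set F c | c in setT]| <= r ^ #|G|)%N.
  by rewrite (leq_trans (leq_imset_card _ _)) // cardsT card_ffun cardZ card_ord.
have := leq_trans (subset_leq_card sub) h2; rewrite h1 leq_exp2l //.
Qed.


Lemma pq_facts p q : prime p -> prime q -> p != q ->
  [/\ (1 < p * q)%N, (1 < p)%N, (1 < q)%N, (p %| p * q)%N & (q %| p * q)%N].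
Proof.
move=> pp pq _; have p1 := prime_gt1 pp; have q1 := prime_gt1 pq.
split=> //; last by rewrite dvdn_mull.
- by rewrite (@ltn_mul 1 1).
- by rewrite dvdn_mulr.
Qed.

Definition ep p q : 'Z_(p * q) := (chinese p q 1 0)%:R.

Lemma ep_p p q : prime p -> prime q -> p != q -> phi p (ep p q) = 1.
Proof.
move=> pp pq npq; have [M1 p1 q1 pM qM] := pq_facts pp pq npq.
have cpq : coprime p q by rewrite prime_coprime // dvdn_prime2.
by rewrite /ep phi_nat // -Zp_nat_mod // chinese_modl // modn_small.
Qed.

Lemma ep_q p q : prime p -> prime q -> p != q -> phi q (ep p q) = 0.
Proof.
move=> pp pq npq; have [M1 p1 q1 pM qM] := pq_facts pp pq npq.
have cpq : coprime p q by rewrite prime_coprime // dvdn_prime2.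
by rewrite /ep phi_nat // -Zp_nat_mod // chinese_modr // mod0n.
Qed.

Definition lab p q n (P : {set 'I_n} -> bool) : {set 'I_n} -> {set 'Z_(p * q)} :=
  fun E => if P E then Ker (p * q) p else Ker (p * q) q.

Lemma lab_ok p q n P : prime p -> prime q -> p != q -> edge_labeling (@lab p q n P).
Proof.
move=> pp pq npq; have [M1 p1 q1 pM qM] := pq_facts pp pq npq.
move=> u v _; rewrite /lab; case: (P _); apply: Ker_npi => //.
  by rewrite ltn_Pmulr // prime_gt0.
by rewrite ltn_Pmull // prime_gt0.
Qed.

Lemma inKer M r (x y : 'Z_M) : (1 < M)%N -> (1 < r)%N -> (r %| M)%N ->
  (x - y \in Ker M r) = (phi r x == phi r y).
Proof. by move=> M1 r1 rM; rewrite inE phiB // subr_eq0. Qed.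

Lemma spline_lab p q n P (f : {ffun 'I_n -> 'Z_(p * q)}) :
  prime p -> prime q -> p != q ->
  (f \in splines (@lab p q n P)) <->
  (forall u v, u != v -> if P [set u; v] then phi p (f u) = phi p (f v)
                         else phi q (f u) = phi q (f v)).
Proof.
move=> pp pq npq; have [M1 p1 q1 pM qM] := pq_facts pp pq npq.
rewrite inE; split.
- move=> /forallP h u v uv; have /forallP /(_ v) /implyP /(_ uv) := h u.
  by rewrite /lab; case: (P _); rewrite inKer // => /eqP.
- move=> h; apply/forallP => u; apply/forallP => v; apply/implyP => uv.
  by have := h u v uv; rewrite /lab; case: (P _); rewrite inKer // => ->.
Qed.

Lemma forall_set2 (T : finType) (P : pred T) (u v : T) :
  [forall a in [set u; v], P a] = P u && P v.
Proof.
apply/forall_inP/andP.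
- by move=> h; split; apply: h; rewrite !inE eqxx ?orbT.
- by move=> [hu hv] a; rewrite !inE => /orP [] /eqP ->.
Qed.


Lemma crt_eq p q (x y : 'Z_(p * q)) : prime p -> prime q -> p != q ->
  phi p x = phi p y -> phi q x = phi q y -> x = y.
Proof.
move=> pp pq npq; have [M1 p1 q1 pM qM] := pq_facts pp pq npq.
move=> hp hq; apply/eqP; rewrite -subr_eq0; apply/eqP; apply: (crt pp pq npq).
  by rewrite phiB // hp subrr.
by rewrite phiB // hq subrr.
Qed.

Definition Hmap p q n k (t : {ffun 'I_k.+1 -> 'Z_p}) : {ffun 'I_n.+1 -> 'Z_(p * q)} :=
  [ffun v : 'I_n.+1 => ep p q * (val (t (inord (minn v k))))%:R].

Definition gen p q n k (j : 'I_k.+1) : {ffun 'I_n.+1 -> 'Z_(p * q)} :=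
  if (j < k)%N then [ffun v : 'I_n.+1 => ep p q * ((v == j :> nat) : nat)%:R]
  else [ffun _ => 1].

Lemma rank_lab p q n k (P : {set 'I_n.+1} -> bool) :
  prime p -> prime q -> p != q -> (k <= n)%N ->
  (forall u v : 'I_n.+1, u != v -> P [set u; v] -> (k <= u)%N && (k <= v)%N) ->
  (forall f, f \in splines (lab p q P) -> forall v : 'I_n.+1, (k <= v)%N -> f v = f ord_max) ->
  (forall f, f \in splines (lab p q P) -> forall v : 'I_n.+1, (v < k)%N ->
      phi q (f v) = phi q (f ord_max)) ->
  spline_rank (lab p q P) = k.+1.
Proof.
move=> pp pq npq kn HP HA HB; have [M1 p1 q1 pM qM] := pq_facts pp pq npq.
apply/eqP; rewrite eqn_leq; apply/andP; split.
- pose G0 := [set gen p q n j | j in 'I_k.+1].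
  apply: (leq_trans (rank_le (G := G0) _)).
    split.
      apply/subsetP => g /imsetP [j _ ->]; apply/(spline_lab _ _ pp pq npq) => u v uv.
      have := HP u v uv; case: (P _) => [/(_ isT) /andP [ku kv] | _];
        rewrite /gen; case: (ltnP j k) => jk /=; rewrite !ffunE //.
        have -> : (u == j :> nat) = false by lia.
        by have -> : (v == j :> nat) = false by lia.
      by rewrite !phiM // ep_q // !mul0r.
    move=> f fS.
    pose coef := fun j : 'I_k.+1 => if (j < k)%N then Posz (val (f (inord j) - f ord_max))
                                    else Posz (val (f ord_max)).
    suff -> : f = \sum_(j < k.+1) gen p q n j *~ coef j by apply: span_imset.
    have gmax : gen p q n (ord_max : 'I_k.+1) = [ffun _ => 1] by rewrite /gen ltnn.
    have cmax : coef ord_max = Posz (val (f ord_max)) by rewrite /coef ltnn.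
    apply/ffunP => v; rewrite sum_ffunE big_ord_recr /= ffunMzE gmax cmax ffunE -pmulrn natr_Zp.
    have ew : forall j : 'I_k, (gen p q n (widen_ord (leqnSn k) j) *~ coef (widen_ord (leqnSn k) j)) v
       = ep p q * ((v == j :> nat) : nat)%:R *~ Posz (val (f (inord j) - f ord_max)).
      by move=> j; rewrite ffunMzE /gen /coef /= ltn_ord ffunE.
    rewrite (eq_bigr _ (fun j _ => ew j)).
    case: (ltnP v k) => vk.
      rewrite (bigD1 (Ordinal vk)) // big1 ?addr0; last first.
        move=> j jne; rewrite (_ : (v == j :> nat) = false) ?mulr0 ?mul0rz //.
        apply/negbTE; apply: contra jne => /eqP e; apply/eqP/val_inj; by rewrite /= e.
      rewrite (_ : (v == Ordinal vk :> nat) = true); last exact: eqxx.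
      rewrite -mulrzr -pmulrn natr_Zp mulr1 (_ : inord (Ordinal vk) = v); last exact: inord_val.
      have ed : ep p q * (f v - f ord_max) = f v - f ord_max.
        apply: crt_eq => //; first by rewrite phiM // ep_p // mul1r.
        by rewrite phiM // ep_q // mul0r phiB // (HB f fS v vk) subrr.
      by rewrite ed -[RHS]/((f v - f ord_max) + 0 + f ord_max) addr0 subrK.
    rewrite big1 ?add0r; first by rewrite (HA f fS v vk).
    move=> j _; have jk := ltn_ord j.
    by rewrite (_ : (v == j :> nat) = false) ?mulr0 ?mul0rz //; lia.
  by rewrite (leq_trans (leq_imset_card _ _)) // card_ord.
- apply: rank_ge => G gG.
  apply: (LB (r := p) (H := @Hmap p q n k) _ _ _ _ _ gG) => //.
  + move=> t; apply/(spline_lab _ _ pp pq npq) => u v uv.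
    have := HP u v uv; case: (P _) => [/(_ isT) /andP [ku kv] | _].
      by rewrite !ffunE (minn_idPr ku) (minn_idPr kv).
    by rewrite !ffunE !phiM // ep_q // !mul0r.
  + move=> t t' e; apply/ffunP => j.
    have jk : (j <= k)%N by rewrite -ltnS.
    have := congr1 (fun g : {ffun 'I_n.+1 -> 'Z_p} => g (inord j)) e.
    rewrite !ffunE !phiM // ep_p // !mul1r !phi_nat // !natr_Zp.
    rewrite inordK; last by rewrite ltnS (leq_trans jk).
    by rewrite (minn_idPl jk) inord_val.
Qed.


Definition Pc n k (E : {set 'I_n}) := [forall a in E, (k <= a)%N].
Definition adj (a b : nat) := [|| a == b, a.+1 == b | b.+1 == a].
Definition Pp n (E : {set 'I_n}) := [forall a in E, forall b in E, adj a b].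

Lemma Pc2 n k (u v : 'I_n) : Pc k [set u; v] = (k <= u)%N && (k <= v)%N.
Proof. by rewrite /Pc forall_set2. Qed.

Lemma Pp2 n (u v : 'I_n) : Pp [set u; v] = adj u v.
Proof. rewrite /Pp forall_set2 !forall_set2 /adj; lia. Qed.

Lemma edge p q n P (f : {ffun 'I_n -> 'Z_(p * q)}) u v :
  prime p -> prime q -> p != q -> f \in splines (lab p q P) -> u != v ->
  (P [set u; v] -> phi p (f u) = phi p (f v)) /\
  (~~ P [set u; v] -> phi q (f u) = phi q (f v)).
Proof.
move=> pp pq npq fS uv; have := proj1 (spline_lab _ _ pp pq npq) fS u v uv.
by case: (P _).
Qed.

Lemma rank_clique p q n k : prime p -> prime q -> p != q -> (0 < k)%N -> (k <= n)%N ->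
  spline_rank (lab p q (@Pc n.+1 k)) = k.+1.
Proof.
move=> pp pq npq k0 kn; apply: rank_lab => //.
- by move=> u v _; rewrite Pc2.
- move=> f fS v kv; case: (v =P ord_max) => [-> // | /eqP vm].
  apply: crt_eq => //.
    by apply: (proj1 (@edge _ _ _ _ f _ _ pp pq npq fS vm)); rewrite Pc2 kv /=; lia.
  have v0 : v != ord0 by apply/eqP => e; rewrite e /= in kv; lia.
  have m0 : (ord_max : 'I_n.+1) != ord0 by apply/eqP => e; have := congr1 val e => /=; lia.
  rewrite (proj2 (@edge _ _ _ _ f _ _ pp pq npq fS v0)); last by rewrite Pc2 /=; lia.
  by rewrite (proj2 (@edge _ _ _ _ f _ _ pp pq npq fS m0)) //; rewrite Pc2 /=; lia.
- move=> f fS v vk.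
  have vm : v != ord_max by apply/eqP => e; rewrite e /= in vk; lia.
  by apply: (proj2 (@edge _ _ _ _ f _ _ pp pq npq fS vm)); rewrite Pc2; lia.
Qed.

Lemma rank_path p q n : prime p -> prime q -> p != q -> (3 <= n)%N ->
  spline_rank (lab p q (@Pp n.+1)) = 1%N.
Proof.
move=> pp pq npq n3; apply: rank_lab => //.
move=> f fS.
have hp : forall j, (j <= n)%N -> phi p (f (inord j)) = phi p (f ord0).
  elim=> [_ | j IH jn]; first by rewrite (_ : inord 0 = ord0) //; apply: val_inj; rewrite /= inordK.
  rewrite -IH ?(ltnW jn) //.
  have ne : (inord j.+1 : 'I_n.+1) != inord j.
    by apply/eqP => /(congr1 val); rewrite /= !inordK //; lia.
  apply: (proj1 (@edge _ _ _ _ f _ _ pp pq npq fS ne)).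
  by rewrite Pp2 /adj !inordK //; lia.
have hq : forall v : 'I_n.+1, phi q (f v) = phi q (f ord0).
  move=> v; case: (ltnP 1 v) => v1.
    have ne : v != ord0 by apply/eqP => e; rewrite e /= in v1.
    by apply: (proj2 (@edge _ _ _ _ f _ _ pp pq npq fS ne)); rewrite Pp2 /adj /=; lia.
  case: (posnP v) => [v0 | vpos].
    by rewrite (_ : v = ord0) //; apply: val_inj; rewrite /= v0.
  pose w : 'I_n.+1 := inord 3.
  have w3 : (w : nat) = 3 by rewrite /w inordK //; lia.
  have ne1 : v != w by apply/eqP => /(congr1 (@nat_of_ord _)); rewrite w3; lia.
  have ne2 : w != ord0 by apply/eqP => /(congr1 (@nat_of_ord _)); rewrite w3.
  rewrite (proj2 (@edge _ _ _ _ f _ _ pp pq npq fS ne1)); last by rewrite Pp2 /adj w3; lia.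
  by rewrite (proj2 (@edge _ _ _ _ f _ _ pp pq npq fS ne2)) // Pp2 /adj w3.
move=> v _; apply: crt_eq => //; last by rewrite !hq.
rewrite -(inord_val v) hp; last by rewrite -ltnS.
by rewrite (_ : ord_max = inord n) ?hp //; apply: val_inj; rewrite /= inordK.
Qed.

Close Scope ring_scope.

Theorem mainTheorem13 (p q : nat) :
  prime p -> prime q -> p != q ->
  forall n : nat, 4 <= n ->
  forall i : nat, 1 <= i <= n ->
  exists alpha : {set 'I_n} -> {set 'Z_(p * q)},
    edge_labeling alpha /\ spline_rank alpha = i.
Proof.
move=> pp pq npq [|n] // n4 [|k] // /andP [_ kn].
case: (posnP k) => [-> | k0].
  exists (lab p q (@Pp n.+1)); split; first exact: lab_ok.
  by apply: rank_path.
exists (lab p q (@Pc n.+1 k)); split; first exact: lab_ok.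
by apply: rank_clique.
Qed.
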